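(* Let $P_{n+1}$ be a subset of $\mathbb{S}^{n+1}$ for which there is a point $a\in P_{n+1}$ such that (1) every rotation of $\mathbb{S}^{n+1}$ at $a$ (i.e. fixing $a$) preserves $P_{n+1}$, and (2) for every great $n$-sphere $\mathbb{S}^n\subseteq\mathbb{S}^{n+1}$ containing both $a$ and its antipode $\bar a$ (a slice under the rotations at $a$), the set $P_{n+1}\cap\mathbb{S}^n$ is admissible in $\mathbb{S}^n$. Then $P_{n+1}$ is admissible in $\mathbb{S}^{n+1}$.
   Context: Spheres carry their geodesic (great-circle) metrics; a great $n$-sphere in $\mathbb{S}^{n+1}$ carries its intrinsic geodesic metric. For a metric space $X$, $\Delta(X)=\{f:X\to\mathbb{R}\text{ bounded}:f(x)+f(x')\ge d_X(x,x')\}$ and the tight span $\mathbf{E}(X)$ is the set of pointwise-minimal elements of $\Delta(X)$. A subset $P$ of a sphere $\mathbb{S}^m$ is admissible if the function $x\mapsto d_{\mathbb{S}^m}(x,P)+\frac12\mathrm{diam}(P)$ belongs to $\mathbf{E}(\mathbb{S}^m)$, where $d_{\mathbb{S}^m}(x,P)=\inf_{p\in P}d_{\mathbb{S}^m}(x,p)$. *)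

(* Defs.v *)
(* Spheres S^m are the unit spheres of R^(m+1)
   (row vectors 'rV[R]_m.+1) with the great-circle metric acos <x,y>. *)
From HB Require Import structures.
From mathcomp Require Import all_boot all_order all_algebra.
From mathcomp Require Import all_classical all_reals all_analysis.
Set Implicit Arguments. Unset Strict Implicit. Unset Printing Implicit Defensive.
Import Order.TTheory GRing.Theory Num.Theory.
Local Open Scope classical_set_scope.
Local Open Scope ring_scope.

Section Defs.
Variable R : realType.

Definition dotp (k : nat) (u v : 'rV[R]_k) : R := (u *m v^T) 0 0.

Definition sphere (m : nat) : set 'rV[R]_m.+1 := [set x | dotp x x = 1].

Definition gdist (k : nat) (x y : 'rV[R]_k) : R := acos (dotp x y).

Definition dist_to (k : nat) (P : set 'rV[R]_k) (x : 'rV[R]_k) : R :=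
  inf [set gdist x p | p in P].

Definition diam (k : nat) (P : set 'rV[R]_k) : R :=
  sup [set gdist pq.1 pq.2 | pq in P `*` P].

(* Delta(X) for the metric subspace X (metric = restriction of gdist);
   functions on X are represented as functions on the ambient space,
   only their values on X matter. *)
Definition Delta (k : nat) (X : set 'rV[R]_k) (f : 'rV[R]_k -> R) : Prop :=
  (exists M : R, forall x, X x -> `|f x| <= M) /\
  (forall x y, X x -> X y -> gdist x y <= f x + f y).

Definition tight_span (k : nat) (X : set 'rV[R]_k) (f : 'rV[R]_k -> R) : Prop :=
  Delta X f /\
  (forall g, Delta X g -> (forall x, X x -> g x <= f x) ->
     forall x, X x -> g x = f x).

Definition admissible (k : nat) (X P : set 'rV[R]_k) : Prop :=
  tight_span X (fun x => dist_to P x + diam P / 2).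

(* rotations of R^k (acting on row vectors by x |-> x *m M) *)
Definition rotation (k : nat) (M : 'M[R]_k) : Prop :=
  M *m M^T = 1%:M /\ \det M = 1.

Definition great_sphere (m j : nat) (V : 'M[R]_(j, m.+1)) : set 'rV[R]_m.+1 :=
  [set x | @sphere m x /\ (x <= V)%MS].

End Defs.

(* Main.v *)
Require Import Defs.
From HB Require Import structures.
From mathcomp Require Import all_boot all_order all_algebra.
From mathcomp Require Import all_classical all_reals all_analysis.
From mathcomp Require Import ring lra zify.
Set Implicit Arguments. Unset Strict Implicit. Unset Printing Implicit Defensive.
Import Order.TTheory GRing.Theory Num.Theory.
Local Open Scope classical_set_scope.
Local Open Scope ring_scope.



Section Dot.
Variable R : realType.
Variable k : nat.
Implicit Types u v w : 'rV[R]_k.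

Lemma dotpE u v : dotp u v = \sum_i u 0 i * v 0 i.
Proof. by rewrite /dotp !mxE; apply: eq_bigr => i _; rewrite mxE. Qed.

Lemma dotpC u v : dotp u v = dotp v u.
Proof. by rewrite !dotpE; apply: eq_bigr => i _; rewrite mulrC. Qed.

Lemma dotpDl u v w : dotp (u + v) w = dotp u w + dotp v w.
Proof. by rewrite !dotpE -big_split; apply: eq_bigr => i _; rewrite mxE mulrDl. Qed.

Lemma dotpZl c u w : dotp (c *: u) w = c * dotp u w.
Proof. by rewrite !dotpE mulr_sumr; apply: eq_bigr => i _; rewrite mxE mulrA. Qed.

Lemma dotpNl u w : dotp (- u) w = - dotp u w.
Proof. by rewrite -scaleN1r dotpZl mulN1r. Qed.

Lemma dotpBl u v w : dotp (u - v) w = dotp u w - dotp v w.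
Proof. by rewrite dotpDl dotpNl. Qed.

Lemma dotpDr u v w : dotp w (u + v) = dotp w u + dotp w v.
Proof. by rewrite !(dotpC w) dotpDl. Qed.

Lemma dotpZr c u w : dotp w (c *: u) = c * dotp w u.
Proof. by rewrite !(dotpC w) dotpZl. Qed.

Lemma dotpNr u w : dotp w (- u) = - dotp w u.
Proof. by rewrite !(dotpC w) dotpNl. Qed.

Lemma dotpBr u v w : dotp w (u - v) = dotp w u - dotp w v.
Proof. by rewrite !(dotpC w) dotpBl. Qed.

Lemma dotp0l u : dotp 0 u = 0.
Proof. by rewrite -(scale0r 0) dotpZl mul0r. Qed.

Lemma dotp_ge0 u : 0 <= dotp u u.
Proof. by rewrite dotpE; apply: sumr_ge0 => i _; rewrite -expr2 sqr_ge0. Qed.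

Lemma dotp_eq0 u : dotp u u = 0 -> u = 0.
Proof.
rewrite dotpE => /psumr_eq0P H; apply/rowP => i; rewrite mxE.
have := H (fun j _ => (ltac:(rewrite -expr2 sqr_ge0 //) : 0 <= u 0 j * u 0 j)) i isT.
by move/eqP; rewrite mulf_eq0 orbb => /eqP.
Qed.

Lemma dotp_mulmx u v (M : 'M[R]_k) : M *m M^T = 1%:M ->
  dotp (u *m M) (v *m M) = dotp u v.
Proof. by move=> HM; rewrite /dotp trmx_mul mulmxA -(mulmxA u) HM mulmx1. Qed.

Lemma dotp_unit_bound u v : dotp u u = 1 -> dotp v v = 1 -> -1 <= dotp u v <= 1.
Proof.
move=> hu hv; have h1 := dotp_ge0 (u - v); have h2 := dotp_ge0 (u + v).
rewrite !dotpBl !dotpBr (dotpC v u) hu hv in h1.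
rewrite !dotpDl !dotpDr (dotpC v u) hu hv in h2.
apply/andP; split; lra.
Qed.

End Dot.



Section Refl.
Variable R : realType.
Variable k : nat.
Implicit Types x z : 'rV[R]_k.

Lemma det_rank1 (z : 'rV[R]_k) (c : R) :
  \det (1%:M - c *: (z^T *m z)) = 1 - c * (z *m z^T) 0 0.
Proof.
pose X := block_mx (1%:M : 'M[R]_1) z (c *: z^T) (1%:M : 'M[R]_k).
have E1 : X = block_mx 1%:M 0 (c *: z^T) 1%:M *m block_mx 1%:M z 0 (1%:M - c *: (z^T *m z)).
  rewrite mulmx_block ?mul1mx ?mulmx1 ?mul0mx ?mulmx0 ?addr0 ?add0r.
  by rewrite -scalemxAl addrC subrK.
have E2 : X = block_mx 1%:M z 0 1%:M *m block_mx (1%:M - c *: (z *m z^T)) 0 (c *: z^T) 1%:M.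
  rewrite mulmx_block ?mul1mx ?mulmx1 ?mul0mx ?mulmx0 ?addr0 ?add0r.
  by rewrite -scalemxAr subrK.
have := congr1 determinant E1; rewrite E2 !det_mulmx det_lblock det_ublock.
rewrite det_ublock det_lblock !det1 !mul1r !mulr1 det_mx11 => <-.
by rewrite !mxE eqxx /= mulr1n.
Qed.

Definition refl z : 'M[R]_k := 1%:M - (2 / dotp z z) *: (z^T *m z).

Lemma refl_apply x z : x *m refl z = x - (2 * dotp x z / dotp z z) *: z.
Proof.
rewrite /refl mulmxBr mulmx1 -scalemxAr mulmxA (mx11_scalar (x *m z^T)) mul_scalar_mx scalerA.
by rewrite -/(dotp x z) mulrAC.
Qed.

Lemma reflK x z : z != 0 -> x *m refl z *m refl z = x.
Proof.
move=> nz; have dz : dotp z z != 0 by apply/eqP => /dotp_eq0 /eqP; rewrite (negbTE nz).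
rewrite !refl_apply dotpBl dotpZl.
set d := dotp z z; set t := dotp x z.
have -> : 2 * (t - 2 * t / d * d) / d = - (2 * t / d) by field.
by rewrite scaleNr opprK subrK.
Qed.

Lemma refl_tr z : (refl z)^T = refl z.
Proof. by rewrite /refl linearB /= trmx1 linearZ /= trmx_mul trmxK. Qed.

Lemma refl_orth z : z != 0 -> refl z *m (refl z)^T = 1%:M.
Proof.
move=> nz; rewrite refl_tr; apply/row_matrixP => i.
by rewrite row_mul rowE reflK // rowE mulmx1.
Qed.

Lemma refl_det z : z != 0 -> \det (refl z) = -1.
Proof.
move=> nz; have dz : dotp z z != 0 by apply/eqP => /dotp_eq0 /eqP; rewrite (negbTE nz).
rewrite /refl det_rank1 -/(dotp z z) divfK //; lra.
Qed.

End Refl.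



Section Rot.
Variable R : realType.
Variable m : nat.
Implicit Types a u v w x : 'rV[R]_m.+3.

Lemma orth_exists a u : exists v, v != 0 /\ dotp a v = 0 /\ dotp u v = 0.
Proof.
pose B := row_mx a^T u^T.
pose K := kermx B.
have rK : (0 < \rank K)%N.
  rewrite mxrank_ker; have := rank_leq_col B; lia.
have nK : K != 0 by apply: contraTneq rK => ->; rewrite mxrank0.
exists (nz_row K); split; first by rewrite nz_row_eq0.
have /sub_kermxP : (nz_row K <= K)%MS by exact: nz_row_sub.
rewrite mul_mx_row => /eqP; rewrite row_mx_eq0 => /andP[/eqP h1 /eqP h2].
split; rewrite dotpC /dotp; [rewrite h1|rewrite h2]; by rewrite mxE.
Qed.

Lemma rotation1 : rotation (1%:M : 'M[R]_m.+3).
Proof. by split; rewrite ?trmx1 ?mulmx1 ?det1. Qed.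

Lemma rot_exists a w u : dotp w w = 1 -> dotp u u = 1 -> dotp w a = 0 -> dotp u a = 0 ->
  exists M, rotation M /\ a *m M = a /\ w *m M = u.
Proof.
move=> hw hu hwa hua.
have [->|nwu] := eqVneq w u.
  by exists 1%:M; split; [exact: rotation1 | rewrite !mulmx1].
have [v [nv [hav huv]]] := orth_exists a u.
have nz : w - u != 0 by rewrite subr_eq0.
exists (refl (w - u) *m refl v); split; [split|split].
- rewrite trmx_mul mulmxA -(mulmxA (refl (w-u))) refl_orth // mulmx1 refl_orth //.
- by rewrite det_mulmx !refl_det // mulrNN mulr1.
- rewrite mulmxA (refl_apply a (w - u)) dotpBr (dotpC a w) (dotpC a u) hwa hua subrr mulr0 mul0r scale0r subr0.
  by rewrite refl_apply hav mulr0 mul0r scale0r subr0.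
- rewrite mulmxA (refl_apply w (w - u)).
  have dd : dotp (w - u) (w - u) = 2 * dotp w (w - u).
    by rewrite !dotpBl !dotpBr hw hu (dotpC u w); ring.
  have dn : dotp w (w - u) != 0.
    apply/eqP => h; move: dd; rewrite h mulr0 => /dotp_eq0 /eqP; by rewrite (negbTE nz).
  rewrite dd divff ?mulf_neq0 ?pnatr_eq0 // scale1r opprB addrC subrK.
  by rewrite refl_apply huv mulr0 mul0r scale0r subr0.
Qed.

End Rot.



Section Geo.
Variable R : realType.
Variable m : nat.
Implicit Types a u v w x y z : 'rV[R]_m.+3.

Lemma lin_sub j (V : 'M[R]_(j, m.+3)) (s t : R) x y :
  (x <= V)%MS -> (y <= V)%MS -> ((s *: x + t *: y)%R <= V)%MS.
Proof. by move=> hx hy; apply: addmx_sub; apply: scalemx_sub. Qed.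

Lemma unit_orth a : exists u, dotp u u = 1 /\ dotp u a = 0.
Proof.
have [v [nv [hav _]]] := orth_exists a a.
have dv : 0 < dotp v v.
  rewrite lt_def dotp_ge0 andbT; apply/eqP => /dotp_eq0 /eqP; by rewrite (negbTE nv).
exists ((Num.sqrt (dotp v v))^-1 *: v); split.
  rewrite dotpZl dotpZr mulrA -expr2 exprVn sqr_sqrtr ?(ltW dv) // mulVf //.
  by rewrite gt_eqF.
by rewrite dotpZl dotpC hav mulr0.
Qed.

Lemma decomp a x u0 j (V : 'M[R]_(j, m.+3)) :
  dotp a a = 1 -> dotp x x = 1 -> dotp u0 u0 = 1 -> dotp u0 a = 0 ->
  (a <= V)%MS -> (x <= V)%MS -> (u0 <= V)%MS ->
  exists u, [/\ dotp u u = 1, dotp u a = 0, (u <= V)%MS &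
     x = dotp x a *: a + Num.sqrt (1 - dotp x a ^+ 2) *: u].
Proof.
move=> ha hx hu0 hu0a aV xV u0V.
set al := dotp x a.
pose r := x - al *: a.
have rr : dotp r r = 1 - al ^+ 2.
  rewrite /r !dotpBl !dotpBr !dotpZl !dotpZr ha hx (dotpC a x) -/al; ring.
have ra : dotp r a = 0 by rewrite /r dotpBl dotpZl ha -/al mulr1 subrr.
have [r0|nr] := eqVneq r 0.
  exists u0; split => //.
  rewrite -rr r0 dotp0l sqrtr0 scale0r addr0.
  by apply/eqP; rewrite -subr_eq0 -/r r0.
have dr : 0 < dotp r r.
  rewrite lt_def dotp_ge0 andbT; apply/eqP => /dotp_eq0 /eqP; by rewrite (negbTE nr).
have sq : 0 < Num.sqrt (1 - al ^+ 2) by rewrite -rr sqrtr_gt0.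
exists ((Num.sqrt (1 - al ^+ 2))^-1 *: r); split.
- rewrite dotpZl dotpZr mulrA -expr2 exprVn sqr_sqrtr -?rr ?(ltW dr) // mulVf //.
  by rewrite gt_eqF.
- by rewrite dotpZl ra mulr0.
- by rewrite scalemx_sub // /r -scaleN1r scalerA -[x]scale1r lin_sub.
- rewrite scalerA mulfV ?gt_eqF // scale1r /r.
  by rewrite addrC subrK.
Qed.

Lemma bessel a u y : dotp a a = 1 -> dotp u u = 1 -> dotp u a = 0 -> dotp y y = 1 ->
  `|dotp u y| <= Num.sqrt (1 - dotp y a ^+ 2).
Proof.
move=> ha hu hua hy.
have h := dotp_ge0 (y - (dotp y a *: a + dotp u y *: u)).
rewrite !dotpBl !dotpBr !dotpDl !dotpDr !dotpZl !dotpZr ha hu hy in h.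
rewrite (dotpC a u) hua (dotpC a y) (dotpC y u) in h.
rewrite -sqrtr_sqr ler_sqrt; first by nra.
by nra.
Qed.

Lemma rot_dotp (M : 'M[R]_m.+3) x y : rotation M -> dotp (x *m M) (y *m M) = dotp x y.
Proof. by case=> h _; rewrite dotp_mulmx. Qed.

Lemma rotation_tr (M : 'M[R]_m.+3) : rotation M -> rotation M^T.
Proof. by case=> h1 h2; split; rewrite ?trmxK ?det_tr // mulmx1C. Qed.

Lemma rot_fix_tr (M : 'M[R]_m.+3) a : rotation M -> a *m M = a -> a *m M^T = a.
Proof. by case=> h1 _ h; rewrite -{1}h -mulmxA h1 mulmx1. Qed.

Lemma rot_orbit a p u : dotp a a = 1 -> dotp p p = 1 -> dotp u u = 1 -> dotp u a = 0 ->
  exists M, [/\ rotation M, a *m M = a &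
    p *m M = dotp p a *: a + Num.sqrt (1 - dotp p a ^+ 2) *: u].
Proof.
move=> ha hp hu hua.
have [w [hw hwa _ hpw]] := decomp ha hp hu hua (submx1 a) (submx1 p) (submx1 u).
have [M [rM [aM wM]]] := rot_exists hw hu hwa hua.
exists M; split => //.
by rewrite {1}hpw mulmxDl -!scalemxAl aM wM.
Qed.

Lemma slice_exists a u : exists V : 'M[R]_(m.+2, m.+3),
  [/\ \rank V = m.+2, (a <= V)%MS & (u <= V)%MS].
Proof.
have [v [nv [hav huv]]] := orth_exists a u.
pose K := kermx v^T.
have rK : \rank K = m.+2.
  by rewrite /K mxrank_ker mxrank_tr rank_rV nv.
pose V := castmx (rK, erefl m.+3) (row_base K).
have eV : (V :=: K)%MS.
  exact: (eqmx_trans (eqmx_cast _ _) (eq_row_base K)).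
exists V; split.
- by rewrite eV.
- rewrite eV; apply/sub_kermxP; apply/matrixP => i j; rewrite !ord1 mxE; move: hav; rewrite /dotp !mxE; exact: id.
- rewrite eV; apply/sub_kermxP; apply/matrixP => i j; rewrite !ord1 mxE; move: huv; rewrite /dotp !mxE; exact: id.
Qed.

Lemma acos_anti (s t : R) : -1 <= s <= 1 -> -1 <= t <= 1 -> s <= t -> acos t <= acos s.
Proof.
move=> hs ht st; rewrite leNgt; apply/negP => lt.
have := lt; rewrite -ltr_cos ?in_itv /= ?acos_ge0 ?acos_lepi //.
rewrite !acosK ?in_itv //=; lra.
Qed.

End Geo.



Section InfSup.
Variable R : realType.
Variable m : nat.
Implicit Types a u v w x y z : 'rV[R]_m.+3.
Implicit Types Q : set 'rV[R]_m.+3.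

Lemma gdist_rng x y : dotp x x = 1 -> dotp y y = 1 -> 0 <= gdist x y <= pi.
Proof.
move=> hx hy; have h := dotp_unit_bound hx hy.
by rewrite /gdist acos_ge0 // acos_lepi.
Qed.

Lemma dist_le Q z p : Q `<=` @sphere R m.+2 -> dotp z z = 1 -> Q p ->
  dist_to Q z <= gdist z p.
Proof.
move=> HQ hz Qp; apply: ge_inf; last by exists p.
exists 0 => y [q Qq <-]; by case/andP: (gdist_rng hz (HQ _ Qq)).
Qed.

Lemma dist_ge Q z c p0 : Q p0 -> (forall p, Q p -> c <= gdist z p) -> c <= dist_to Q z.
Proof.
move=> Qp0 H; apply: lb_le_inf; first by exists (gdist z p0), p0.
by move=> y [q Qq <-]; apply: H.
Qed.

Lemma dist_rng Q z p0 : Q `<=` @sphere R m.+2 -> dotp z z = 1 -> Q p0 ->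
  0 <= dist_to Q z <= pi.
Proof.
move=> HQ hz Qp0; apply/andP; split.
  apply: (dist_ge Qp0) => p Qp; by case/andP: (gdist_rng hz (HQ _ Qp)).
apply: le_trans (dist_le HQ hz Qp0) _; by case/andP: (gdist_rng hz (HQ _ Qp0)).
Qed.

Lemma diam_ge Q p q : Q `<=` @sphere R m.+2 -> Q p -> Q q -> gdist p q <= diam Q.
Proof.
move=> HQ Qp Qq; apply: ub_le_sup; last by exists (p, q).
exists pi => y [[p1 q1] [/= Q1 Q2] <-]; by case/andP: (gdist_rng (HQ _ Q1) (HQ _ Q2)).
Qed.

Lemma diam_le Q c p0 : Q p0 -> (forall p q, Q p -> Q q -> gdist p q <= c) -> diam Q <= c.
Proof.
move=> Qp0 H; apply: ge_sup; first by exists (gdist p0 p0), (p0, p0).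
by move=> y [[p1 q1] [/= Q1 Q2] <-]; apply: H.
Qed.

Lemma diam_rng Q p0 : Q `<=` @sphere R m.+2 -> Q p0 -> 0 <= diam Q <= pi.
Proof.
move=> HQ Qp0; apply/andP; split.
  apply: le_trans (diam_ge HQ Qp0 Qp0); by case/andP: (gdist_rng (HQ _ Qp0) (HQ _ Qp0)).
apply: (diam_le Qp0) => p q Qp Qq; by case/andP: (gdist_rng (HQ _ Qp) (HQ _ Qq)).
Qed.

End InfSup.



Section Main.
Variable R : realType.
Variable m : nat.
Variable P : set 'rV[R]_m.+3.
Variable a : 'rV[R]_m.+3.
Hypothesis HP : P `<=` @sphere R m.+2.
Hypothesis Pa : P a.
Hypothesis Hrot : forall M : 'M[R]_m.+3, rotation M -> a *m M = a ->
     forall x, P (x *m M) <-> P x.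

Let ha : dotp a a = 1. Proof. exact: HP Pa. Qed.

Lemma PS_sub j (V : 'M[R]_(j, m.+3)) : (P `&` great_sphere V) `<=` @sphere R m.+2.
Proof. by move=> p [Pp _]; apply: HP. Qed.

Lemma orbitP p u : P p -> dotp u u = 1 -> dotp u a = 0 ->
  exists q, [/\ P q, dotp q q = 1, dotp q a = dotp p a &
     q = dotp p a *: a + Num.sqrt (1 - dotp p a ^+ 2) *: u] /\
     exists M, [/\ rotation M, a *m M = a & p *m M = q].
Proof.
move=> Pp hu hua; have hp : dotp p p = 1 by apply: HP.
have [M [rM aM pM]] := rot_orbit ha hp hu hua.
exists (p *m M); split; last by exists M.
split => //.
- by apply/(Hrot rM aM).
- by rewrite rot_dotp.
- by rewrite -{1}aM rot_dotp.
Qed.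

Lemma dist_slice j (V : 'M[R]_(j, m.+3)) u0 z :
  dotp u0 u0 = 1 -> dotp u0 a = 0 -> (a <= V)%MS -> (u0 <= V)%MS ->
  dotp z z = 1 -> (z <= V)%MS ->
  dist_to P z = dist_to (P `&` great_sphere V) z.
Proof.
move=> hu0 hu0a aV u0V hz zV.
have PSa : (P `&` great_sphere V) a by split => //; split => //; exact: ha.
apply/eqP; rewrite eq_le; apply/andP; split.
  apply: (dist_ge PSa) => p [Pp _]; exact: dist_le HP hz Pp.
apply: (dist_ge Pa) => p Pp.
have hp : dotp p p = 1 by apply: HP.
have [u [hu hua uV zeq]] := decomp ha hz hu0 hu0a aV zV u0V.
have [q [[Pq hq qa qeq] _]] := orbitP Pp hu hua.
have Sq : (P `&` great_sphere V) q.
  by split => //; split => //; rewrite qeq lin_sub.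
apply: le_trans (dist_le (PS_sub (V:=V)) hz Sq) _.
rewrite /gdist; apply: acos_anti; try exact: dotp_unit_bound.
have e1 : dotp z q = dotp z a * dotp p a +
    Num.sqrt (1 - dotp z a ^+ 2) * Num.sqrt (1 - dotp p a ^+ 2).
  rewrite qeq {1}zeq !dotpDl !dotpDr !dotpZl !dotpZr ha hu (dotpC a u) hua; ring.
have e2 : dotp z p = dotp z a * dotp p a + Num.sqrt (1 - dotp z a ^+ 2) * dotp u p.
  by rewrite {1}zeq dotpDl !dotpZl (dotpC a p).
rewrite e1 e2 lerD2l; apply: ler_wpM2l; first exact: sqrtr_ge0.
exact: le_trans (ler_norm _) (bessel ha hu hua hp).
Qed.

Lemma diam_slice j (V : 'M[R]_(j, m.+3)) u :
  dotp u u = 1 -> dotp u a = 0 -> (a <= V)%MS -> (u <= V)%MS ->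
  diam P = diam (P `&` great_sphere V).
Proof.
move=> hu hua aV uV.
have PSa : (P `&` great_sphere V) a by split => //; split => //; exact: ha.
apply/eqP; rewrite eq_le; apply/andP; split; last first.
  apply: (diam_le PSa) => p q [Pp _] [Pq _]; exact: diam_ge HP Pp Pq.
apply: (diam_le Pa) => p p' Pp Pp'.
have hp : dotp p p = 1 by apply: HP.
have hp' : dotp p' p' = 1 by apply: HP.
have hnu : dotp (- u) (- u) = 1 by rewrite dotpNl dotpNr opprK.
have hnua : dotp (- u) a = 0 by rewrite dotpNl hua oppr0.
have [q [[Pq hq qa qeq] [M [rM aM pM]]]] := orbitP Pp hu hua.
have [q' [[Pq' hq' qa' qeq'] _]] := orbitP Pp' hnu hnua.
have Sq : (P `&` great_sphere V) q.
  by split => //; split => //; rewrite qeq lin_sub.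
have Sq' : (P `&` great_sphere V) q'.
  by split => //; split => //; rewrite qeq' lin_sub // -scaleN1r scalemx_sub.
apply: le_trans (diam_ge (PS_sub (V:=V)) Sq Sq').
rewrite /gdist; apply: acos_anti; try exact: dotp_unit_bound.
have e1 : dotp q q' = dotp p a * dotp p' a -
    Num.sqrt (1 - dotp p a ^+ 2) * Num.sqrt (1 - dotp p' a ^+ 2).
  rewrite qeq qeq' !dotpDl !dotpDr !dotpZl !dotpZr !dotpNr ha hu (dotpC a u) hua; ring.
have hy : dotp (p' *m M) (p' *m M) = 1 by rewrite rot_dotp.
have ya : dotp (p' *m M) a = dotp p' a by rewrite -{1}aM rot_dotp.
have e2 : dotp p p' = dotp p a * dotp p' a + Num.sqrt (1 - dotp p a ^+ 2) * dotp u (p' *m M).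
  rewrite -(rot_dotp p p' rM) pM qeq dotpDl !dotpZl (dotpC a) ya; done.
rewrite e1 e2 lerD2l -mulrN; apply: ler_wpM2l; first exact: sqrtr_ge0.
have := bessel ha hu hua hy; rewrite ya => hb.
rewrite lerNl; apply: le_trans hb; by rewrite -normrN ler_norm.
Qed.

Lemma dist_rot_half (M : 'M[R]_m.+3) z : rotation M -> a *m M = a -> dotp z z = 1 ->
  dist_to P (z *m M) <= dist_to P z.
Proof.
move=> rM aM hz; apply: (dist_ge Pa) => p Pp.
have hzM : dotp (z *m M) (z *m M) = 1 by rewrite rot_dotp.
have PpM : P (p *m M) by apply/(Hrot rM aM).
by apply: le_trans (dist_le HP hzM PpM) _; rewrite /gdist rot_dotp.
Qed.

Lemma dist_rot (M : 'M[R]_m.+3) z : rotation M -> a *m M = a -> dotp z z = 1 ->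
  dist_to P (z *m M) = dist_to P z.
Proof.
move=> rM aM hz; apply/eqP; rewrite eq_le dist_rot_half //=.
have hzM : dotp (z *m M) (z *m M) = 1 by rewrite rot_dotp.
have := dist_rot_half (rotation_tr rM) (rot_fix_tr rM aM) hzM.
by rewrite -mulmxA (proj1 rM) mulmx1.
Qed.

End Main.



Theorem proposition4p13 (R : realType) (n : nat) (hn : (1 <= n)%N)
  (P : set 'rV[R]_n.+2) (a : 'rV[R]_n.+2) :
  P `<=` @sphere R n.+1 ->
  P a ->
  (forall M : 'M[R]_n.+2, rotation M -> a *m M = a ->
     forall x, P (x *m M) <-> P x) ->
  (forall V : 'M[R]_(n.+1, n.+2), \rank V = n.+1 -> (a <= V)%MS ->
     admissible (great_sphere V) (P `&` great_sphere V)) ->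
  admissible (@sphere R n.+1) P.
Proof.
case: n hn P a => [//|m] _ P a HP Pa Hrot Hsl.
have ha : dotp a a = 1 := HP _ Pa.
have Hf : forall x, dotp x x = 1 -> exists u (V : 'M[R]_(m.+2, m.+3)),
    [/\ dotp u u = 1, dotp u a = 0, \rank V = m.+2, (a <= V)%MS &
        (u <= V)%MS /\ x = dotp x a *: a + Num.sqrt (1 - dotp x a ^+ 2) *: u].
  move=> x hx; have [u0 [hu0 hu0a]] := unit_orth a.
  have [u [hu hua _ xeq]] := decomp ha hx hu0 hu0a (submx1 a) (submx1 x) (submx1 u0).
  have [V [rV aV uV]] := slice_exists a u.
  by exists u, V; split.
have Hfeq : forall (V : 'M[R]_(m.+2, m.+3)) u, dotp u u = 1 -> dotp u a = 0 ->
    (a <= V)%MS -> (u <= V)%MS -> forall z, great_sphere V z ->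
    dist_to P z + diam P / 2 =
    dist_to (P `&` great_sphere V) z + diam (P `&` great_sphere V) / 2.
  move=> V u hu hua aV uV z [hz zV].
  by rewrite (dist_slice HP Pa Hrot hu hua aV uV hz zV) (diam_slice HP Pa Hrot hu hua aV uV).
split; first split.
- exists (pi + pi) => x hx.
  have /andP[d0 d1] := dist_rng HP hx Pa.
  have /andP[e0 e1] := diam_rng HP Pa.
  rewrite ger0_norm; lra.
- move=> x y hx hy.
  have [u [V [hu hua rV aV [uV xeq]]]] := Hf x hx.
  have hnu : dotp (- u) (- u) = 1 by rewrite dotpNl dotpNr opprK.
  have hnua : dotp (- u) a = 0 by rewrite dotpNl hua oppr0.
  have [M [rM aM yM]] := rot_orbit ha hy hnu hnua.
  have hy' : dotp (y *m M) (y *m M) = 1 by rewrite rot_dotp.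
  have Sx : great_sphere V x by split => //; rewrite xeq lin_sub.
  have Sy' : great_sphere V (y *m M).
    by split => //; rewrite yM lin_sub // -scaleN1r scalemx_sub.
  have [[_ Htri] _] := Hsl V rV aV.
  have := Htri x (y *m M) Sx Sy'.
  rewrite -(Hfeq V u hu hua aV uV x Sx) -(Hfeq V u hu hua aV uV _ Sy').
  rewrite (dist_rot HP Pa Hrot rM aM hy).
  apply: le_trans.
  rewrite /gdist; apply: acos_anti; try exact: dotp_unit_bound.
  have e1 : dotp x (y *m M) = dotp x a * dotp y a -
      Num.sqrt (1 - dotp x a ^+ 2) * Num.sqrt (1 - dotp y a ^+ 2).
    rewrite yM {1}xeq !dotpDl !dotpDr !dotpZl !dotpZr !dotpNr ha hu (dotpC a u) hua; ring.
  have e2 : dotp x y = dotp x a * dotp y a + Num.sqrt (1 - dotp x a ^+ 2) * dotp u y.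
    by rewrite {1}xeq dotpDl !dotpZl (dotpC a y).
  rewrite e1 e2 lerD2l -mulrN; apply: ler_wpM2l; first exact: sqrtr_ge0.
  have hb := bessel ha hu hua hy.
  rewrite lerNl; apply: le_trans hb; by rewrite -normrN ler_norm.
- move=> g [[Mg Hgb] Hgt] Hle x hx.
  have [u [V [hu hua rV aV [uV xeq]]]] := Hf x hx.
  have Sx : great_sphere V x by split => //; rewrite xeq lin_sub.
  have [_ Hmin] := Hsl V rV aV.
  rewrite (Hfeq V u hu hua aV uV x Sx).
  apply: Hmin => //.
    split; first by exists Mg => z [hz _]; apply: Hgb.
    by move=> z1 z2 [h1 _] [h2 _]; apply: Hgt.
  move=> z Sz; rewrite -(Hfeq V u hu hua aV uV z Sz); apply: Hle; by case: Sz.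
Qed.
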